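(* Let $d\ge1$, $\alpha>0$, $n\in\mathbb N$. There exists a constant $c<\infty$ depending only on $n,\alpha,d$ such that for every $\ell\in\mathbb N$, $$\sum{}^{*}\ e^{-|u_1-v_1|^\alpha-|u_2-v_2|^\alpha-\cdots-|u_{2n}-v_{2n}|^\alpha}\le c\,\ell^{nd},$$ where $\sum^*$ runs over all $(u_1,\dots,u_{2n},v_1,\dots,v_{2n})\in([-\ell,\ell]^d\cap\mathbb Z^d)^{4n}$ such that for each $i\in\{1,\dots,2n\}$ there exists $j\in\{1,\dots,2n\}$, $j\ne i$, with $\{u_i,v_i\}\cap\{u_j,v_j\}\ne\emptyset$.
   Context: $|\cdot|$ denotes the Euclidean norm. *)

(* Defs.v *)
From HB Require Import structures.
From mathcomp Require Import all_boot all_order all_algebra.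
From mathcomp Require Import all_classical all_reals all_analysis.
Set Implicit Arguments. Unset Strict Implicit. Unset Printing Implicit Defensive.
Import Order.TTheory GRing.Theory Num.Theory.
Local Open Scope ring_scope.

(* A lattice point of [-l,l]^d ∩ Z^d is encoded by its shifted coordinates
   k ↦ x_k + l ∈ {0,…,2l}.  The encoding is a bijection onto the box. *)
Notation boxpt d l := {ffun 'I_d -> 'I_(2 * l).+1}.

Definition coord (d l : nat) (p : boxpt d l) (k : 'I_d) : int :=
  (nat_of_ord (p k))%:Z - l%:Z.

Definition edist (R : realType) (d l : nat) (p q : boxpt d l) : R :=
  Num.sqrt (\sum_(k < d) ((coord p k - coord q k)%:~R) ^+ 2).

Definition star_cond (m d l : nat) (u v : {ffun 'I_m -> boxpt d l}) : bool :=
  [forall i : 'I_m, exists j : 'I_m,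
     (j != i) && [|| u i == u j, u i == v j, v i == u j | v i == v j]].

Definition star_sum (R : realType) (alpha : R) (n d l : nat) : R :=
  \sum_(uv : {ffun 'I_(2 * n) -> boxpt d l} * {ffun 'I_(2 * n) -> boxpt d l}
          | star_cond uv.1 uv.2)
     expR (- \sum_(i < 2 * n) (edist R (uv.1 i) (uv.2 i)) `^ alpha).

(* Main.v *)
Require Import Defs.
From HB Require Import structures.
From mathcomp Require Import all_boot all_order all_algebra.
From mathcomp Require Import all_classical all_reals all_analysis.
From mathcomp Require Import ring lra zify.
Import Order.TTheory GRing.Theory Num.Theory.
Local Open Scope ring_scope.

Definition phi {R : realType} (x : R) : R := x / (`|x| + 1).

Lemma phi_diff (R : realType) (z : int) :
  ((`|z%:~R| + 2) ^+ 2)^-1 <= phi (z%:~R : R) - phi (z%:~R - 1).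
Proof.
rewrite /phi.
case: z => m.
- case: m => [|m].
  + rewrite /= mulr0z normr0 add0r sub0r normrN normr1.
    have -> : (-1 : R) / (1 + 1) = - 2^-1 by rewrite -[1+1]/(2:R) mulN1r.
    rewrite mul0r sub0r opprK; lra.
  + set x : R := (m.+1)%:~R.
    have x1 : 1 <= x by rewrite /x ler1n.
    have -> : `|x| = x by rewrite ger0_norm //; lra.
    have -> : `|x - 1| = x - 1 by rewrite ger0_norm //; lra.
    have -> : x / (x + 1) - (x - 1) / (x - 1 + 1) = (x * (x+1))^-1.
      by field; apply/andP; split; apply/negP => /eqP; lra.
    rewrite lef_pV2 ?posrE; [| nra | nra]; nra.
- rewrite NegzE.
  set y : R := (m.+1)%:~R.
  have y1 : 1 <= y by rewrite /y ler1n.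
  rewrite (_ : ((- (m.+1)%:Z)%:~R : R) = - y); last by rewrite /y mulrNz.
  have -> : `|- y| = y by rewrite normrN ger0_norm //; lra.
  have -> : `|- y - 1| = y + 1 by rewrite -opprD normrN ger0_norm //; lra.
  have -> : - y / (y + 1) - (- y - 1) / (y + 1 + 1) = ((y+1) * (y+2))^-1.
    by field; apply/andP; split; apply/negP => /eqP; lra.
  rewrite lef_pV2 ?posrE; [| nra | nra]; nra.
Qed.
Lemma e_le (R : realType) (alpha : R) (d k : nat) (z : int) :
  0 < alpha -> (0 < d)%N -> 2 <= alpha * k.+1%:R ->
  expR (- (`|z%:~R : R| `^ alpha) / d%:R)
   <= (9 * d%:R ^+ k.+1 * k.+1`!%:R) * ((`|z%:~R : R| + 2) ^+ 2)^-1.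
Proof.
move=> a0 d0 aN.
set m := `|z%:~R : R|.
set K : R := 9 * d%:R ^+ k.+1 * k.+1`!%:R.
have dpos : 0 < d%:R :> R by rewrite ltr0n.
have Kge : 9 <= K.
  have h1 : 1 <= d%:R ^+ k.+1 :> R by rewrite exprn_ege1 // ler1n.
  have h2 : 1 <= k.+1`!%:R :> R by rewrite ler1n fact_gt0.
  rewrite /K; nra.
have m0 : 0 <= m by rewrite /m normr_ge0.
have [z0|zn0] := eqVneq z 0.
  rewrite /m z0 mulr0z normr0 powR0 ?gt_eqF // oppr0 mul0r expR0 add0r.
  rewrite ler_pdivlMr ?exprn_gt0 // mul1r expr2; lra.
have m1 : 1 <= m.
  rewrite /m -intr_norm ler1z.
  by rewrite -gtz0_ge1 normr_gt0.
set y := m `^ alpha / d%:R.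
have y0 : 0 <= y by rewrite divr_ge0 ?powR_ge0 // ltW.
have H1 : m ^+ 2 <= d%:R ^+ k.+1 * y ^+ k.+1.
  rewrite -exprMn /y mulrC divfK ?gt_eqF //.
  rewrite -[_ ^+ k.+1]powR_mulrn ?powR_ge0 // -powRrM -[m ^+ 2]powR_mulrn //.
  by apply: ler_powR.
have H2 : y ^+ k.+1 <= k.+1`!%:R * expR y.
  have := expR_ge1Dxn k y0.
  rewrite -ler_pdivrMl ?ltr0n ?fact_gt0 //.
  move=> h; apply: le_trans h; rewrite mulrC lerDr //.
have H3 : (m + 2) ^+ 2 <= K * expR y.
  apply: (@le_trans _ _ (9 * m ^+ 2)); first nra.
  rewrite /K -!mulrA ler_wpM2l //.
  apply: (le_trans H1); rewrite ler_wpM2l // exprn_ge0 // ltW //.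
rewrite mulNr expRN.
have mp : 0 < (m + 2) ^+ 2 by rewrite exprn_gt0 //; lra.
rewrite -[K / _]invf_div lef_pV2 ?posrE ?expR_gt0 ?divr_gt0 //; last lra.
by rewrite ler_pdivrMr; [rewrite mulrC | lra].
Qed.

Lemma phi_le1 (R : realType) (x : R) : `|x| <= 1 -> `|x| <= 1.
Proof. by []. Qed.
Lemma phi_le1' (R : realType) (x : R) : `|phi x| <= 1.
Proof.
rewrite /phi normrM normfV [`|_ + 1|]ger0_norm ?addr_ge0 //.
by rewrite ler_pdivrMr ?mul1r ?ltr_wpDl // lerDl.
Qed.

Lemma sum1d (R : realType) (alpha : R) (d k a N : nat) :
  0 < alpha -> (0 < d)%N -> 2 <= alpha * k.+1%:R ->
  \sum_(t < N) expR (- (`|((a%:Z - t%:Z)%:~R : R)| `^ alpha) / d%:R)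
   <= 2 * (9 * d%:R ^+ k.+1 * k.+1`!%:R).
Proof.
move=> a0 d0 aN.
set K : R := 9 * d%:R ^+ k.+1 * k.+1`!%:R.
have K0 : 0 <= K by rewrite /K !mulr_ge0 // exprn_ge0.
pose H (t : nat) : R := phi (a%:R - t%:R).
apply: (@le_trans _ _ (\sum_(t < N) K * (H t - H t.+1))).
  apply: ler_sum => t _.
  apply: (le_trans (@e_le R alpha d k (a%:Z - t%:Z) a0 d0 aN)).
  rewrite ler_wpM2l //.
  have -> : H t - H t.+1 = phi ((a%:Z - t%:Z)%:~R) - phi ((a%:Z - t%:Z)%:~R - 1).
    rewrite /H intrB -!pmulrn -natr1 opprD addrA //.
  exact: phi_diff.
rewrite -mulr_sumr mulrC ler_wpM2r //.
rewrite -(big_mkord xpredT (fun t => H t - H t.+1)).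
have -> : \sum_(0 <= t < N) (H t - H t.+1) = H 0%N - H N.
  rewrite (eq_bigr (fun t => (- H t.+1) - (- H t))); last first.
    by move=> t _; rewrite opprK addrC.
  by rewrite telescope_sumr // opprK addrC.
have h1 := @phi_le1' R (a%:R - 0%:R); have h2 := @phi_le1' R (a%:R - N%:R).
rewrite /H.
move: h1 h2; rewrite !ler_norml => /andP[? ?] /andP[? ?]; lra.
Qed.

Definition wt {R : realType} (alpha : R) {d l : nat} (p q : boxpt d l) : R :=
  expR (- (Defs.edist R p q) `^ alpha).

Lemma edist_sym (R : realType) (d l : nat) (p q : boxpt d l) :
  Defs.edist R p q = Defs.edist R q p.
Proof.
rewrite /Defs.edist; congr Num.sqrt; apply: eq_bigr => k _.
by rewrite -sqrrN -mulrNz opprB.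
Qed.

Lemma wt_le (R : realType) (alpha : R) (d l : nat) (p q : boxpt d l) :
  0 < alpha -> (0 < d)%N ->
  wt alpha p q <= \prod_(k < d)
     expR (- (`|(((p k : nat)%:Z - (q k : nat)%:Z)%:~R : R)| `^ alpha) / d%:R).
Proof.
move=> a0 d0.
set D := fun k : 'I_d => (((p k : nat)%:Z - (q k : nat)%:Z)%:~R : R).
have eD : Defs.edist R p q = Num.sqrt (\sum_(k < d) D k ^+ 2).
  rewrite /Defs.edist; congr Num.sqrt; apply: eq_bigr => k _.
  by rewrite /D /coord opprB addrA subrK.
set E := Defs.edist R p q.
have E0 : 0 <= E by rewrite /E eD sqrtr_ge0.
have hk : forall k, `|D k| `^ alpha <= E `^ alpha.
  move=> k; apply: (ge0_ler_powR (ltW a0)); rewrite ?nnegrE //.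
  rewrite /E eD -sqrtr_sqr ler_wsqrtr // (bigD1 k) //= lerDl.
  by apply: sumr_ge0 => i _; rewrite sqr_ge0.
rewrite /wt -expR_sum ler_expR.
rewrite -mulr_suml sumrN -/E.
have : \sum_(k < d) `|D k| `^ alpha <= d%:R * E `^ alpha.
  apply: (@le_trans _ _ (\sum_(k < d) E `^ alpha)); first exact: ler_sum.
  by rewrite sumr_const card_ord mulr_natl.
have dpos : 0 < d%:R :> R by rewrite ltr0n.
move=> h.
rewrite mulNr lerN2 ler_pdivrMr // mulrC //.
Qed.

Definition Kc {R : realType} (d k : nat) : R := 2 * (9 * d%:R ^+ k.+1 * k.+1`!%:R).

Lemma sumwt (R : realType) (alpha : R) (d k l : nat) (p : boxpt d l) :
  0 < alpha -> (0 < d)%N -> 2 <= alpha * k.+1%:R ->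
  \sum_q wt alpha p q <= (Kc d k : R) ^+ d.
Proof.
move=> a0 d0 aN.
apply: (@le_trans _ _ (\sum_(q : boxpt d l) \prod_(j < d)
     expR (- (`|(((p j : nat)%:Z - (q j : nat)%:Z)%:~R : R)| `^ alpha) / d%:R))).
  by apply: ler_sum => q _; apply: wt_le.
rewrite -(bigA_distr_bigA (fun (j : 'I_d) (t : 'I_(2 * l).+1) =>
     expR (- (`|(((p j : nat)%:Z - (t : nat)%:Z)%:~R : R)| `^ alpha) / d%:R))) /=.
have -> : (Kc d k : R) ^+ d = \prod_(j < d) (Kc d k : R) by rewrite prodr_const card_ord.
apply: ler_prod => j _; apply/andP; split.
  by apply: sumr_ge0 => t _; apply: expR_ge0.
exact: sum1d.
Qed.

Lemma sum_ind (R : realFieldType) (P : finType) (G : P -> R) (c : P) :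
  \sum_p G p * (p == c)%:R = G c.
Proof.
rewrite (bigD1 c) //= eqxx mulr1 big1 ?addr0 // => p /negbTE ->.
by rewrite mulr0.
Qed.

Lemma inj_sum_le (R : realFieldType) (A B : finType) (h : A -> B) (G : B -> R) :
  injective h -> (forall b, 0 <= G b) -> \sum_a G (h a) <= \sum_b G b.
Proof.
move=> hi G0.
have -> : \sum_a G (h a) = \sum_(b in (imset h (mem (finset.setTfor A)))) G b.
  rewrite big_imset /=; last by move=> x y _ _; apply: hi.
  by apply: eq_bigl => a; rewrite inE.
rewrite [X in _ <= X](bigID (mem (imset h (mem (finset.setTfor A))))) /= lerDl.
by apply: sumr_ge0 => b _.
Qed.

Lemma sum_pair_prod (R : realFieldType) (I P : finType) (f : I -> P -> P -> R) :
  \sum_(uv : {ffun I -> P} * {ffun I -> P}) \prod_i f i (uv.1 i) (uv.2 i)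
  = \prod_i \sum_p \sum_q f i p q.
Proof.
rewrite -(pair_bigA _ (fun u v : {ffun I -> P} => \prod_i f i (u i) (v i))) /=.
rewrite (bigA_distr_bigA (fun i p => \sum_q f i p q)) /=.
apply: eq_bigr => u _.
by rewrite (bigA_distr_bigA (fun i q => f i (u i) q)).
Qed.

Definition share {P : finType} (a b c e : P) : bool := [|| a == c, a == e, b == c | b == e].

Lemma share_le (R : realFieldType) (P : finType) (a b c e : P) :
  (share a b c e)%:R <= (a == c)%:R + (a == e)%:R + (b == c)%:R + (b == e)%:R :> R.
Proof.
rewrite /share.
by case: (a == c); case: (a == e); case: (b == c); case: (b == e) => /=; lra.
Qed.

Lemma e0sum (R : realFieldType) (P : finType) (p0 : P) :
  \sum_p \sum_q ((p == p0) && (q == p0))%:R = 1 :> R.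
Proof.
have -> : \sum_p \sum_q ((p == p0) && (q == p0))%:R = \sum_p (1 * (p == p0)%:R) :> R.
  apply: eq_bigr => p _.
  rewrite -(@sum_ind R P (fun _ => (1 * (p == p0)%:R)) p0).
  apply: eq_bigr => q _.
  by case: (p == p0); case: (q == p0); rewrite /= ?mulr0 ?mulr1 ?mul0r ?mul1r.
by rewrite (@sum_ind R P (fun _ => 1) p0).
Qed.

Lemma share_sum (R : realFieldType) (P : finType) (w : P -> P -> R) (S : R) (c e : P) :
  (forall p q, 0 <= w p q) -> (forall p, \sum_q w p q <= S) ->
  (forall q, \sum_p w p q <= S) ->
  \sum_p \sum_q w p q * (share p q c e)%:R <= 4 * S.
Proof.
move=> w0 wr wc.
apply: (@le_trans _ _ (\sum_p \sum_q (w p q * (p == c)%:R + w p q * (p == e)%:R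
   + w p q * (q == c)%:R + w p q * (q == e)%:R))).
  apply: ler_sum => p _; apply: ler_sum => q _.
  rewrite -!mulrDr ler_wpM2l //; exact: share_le.
under eq_bigr do rewrite !big_split /=.
rewrite !big_split /=.
rewrite (exchange_big _ _ _ _ _ (fun p q => w p q * (p == c)%:R)) /=.
rewrite (exchange_big _ _ _ _ _ (fun p q => w p q * (p == e)%:R)) /=.
under [X in X + _ + _ + _]eq_bigr do rewrite (@sum_ind R P (fun p => w p _) c).
under [X in _ + X + _ + _]eq_bigr do rewrite (@sum_ind R P (fun p => w p _) e).
under [X in _ + _ + X + _]eq_bigr do rewrite (@sum_ind R P (fun q => w _ q) c).
under [X in _ + _ + _ + X]eq_bigr do rewrite (@sum_ind R P (fun q => w _ q) e).
have := wr c; have := wr e; have := wc c; have := wc e; lra.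
Qed.

Definition indc {I P : finType} (F : {set I}) (s : I -> I) (u v : {ffun I -> P}) : bool :=
  [forall i, (i \notin F) ==> (s i \in F) && share (u i) (v i) (u (s i)) (v (s i))].

Lemma core (R : realFieldType) (I P : finType) (w : P -> P -> R) (S : R)
  (F : {set I}) (s : I -> I) (p0 : P) :
  (forall p q, 0 <= w p q) -> (forall p, \sum_q w p q <= S) ->
  (forall q, \sum_p w p q <= S) ->
  \sum_(uv : {ffun I -> P} * {ffun I -> P})
     (\prod_i w (uv.1 i) (uv.2 i)) * (indc F s uv.1 uv.2)%:R
  <= \prod_i (if i \in F then #|P|%:R * S else 4 * S).
Proof.
move=> w0 wr wc.
have S0 : 0 <= S.
  apply: le_trans (wr p0); by apply: sumr_ge0.
pose T := {ffun I -> P}.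
pose mF (u : T) : T := [ffun i => if i \in F then u i else p0].
pose mN (u : T) : T := [ffun i => if i \in F then p0 else u i].
pose h (uv : T * T) : (T * T) * (T * T) := ((mF uv.1, mF uv.2), (mN uv.1, mN uv.2)).
pose e0 (p q : P) : R := ((p == p0) && (q == p0))%:R.
pose m i p q := if i \in F then w p q else e0 p q.
pose k (bF : T * T) i p q :=
  if i \in F then e0 p q else w p q * (share p q (bF.1 (s i)) (bF.2 (s i)))%:R.
pose Tp (b : (T * T) * (T * T)) :=
  (\prod_i m i (b.1.1 i) (b.1.2 i)) * \prod_i k b.1 i (b.2.1 i) (b.2.2 i).
have e00 : forall p q, 0 <= e0 p q by move=> p q; rewrite ler0n.
have m0 : forall i p q, 0 <= m i p q by move=> i p q; rewrite /m; case: ifP.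
have k0 : forall bF i p q, 0 <= k bF i p q.
  by move=> bF i p q; rewrite /k; case: ifP => _ //; rewrite mulr_ge0 ?ler0n.
have Tp0 : forall b, 0 <= Tp b.
  by move=> b; rewrite /Tp mulr_ge0 // prodr_ge0.
have step1 : forall uv : T * T,
    (\prod_i w (uv.1 i) (uv.2 i)) * (indc F s uv.1 uv.2)%:R <= Tp (h uv).
  case=> u v /=.
  case: (boolP (indc F s u v)) => hind; last by rewrite mulr0.
  rewrite mulr1 /Tp /h /= -big_split /=.
  rewrite le_eqVlt; apply/orP; left; apply/eqP/eq_bigr => i _.
  rewrite /m /k /e0 !ffunE.
  case: (boolP (i \in F)) => iF; first by rewrite !eqxx mulr1.
  move/forallP: hind => /(_ i); rewrite iF /= => /andP[siF sh].
  by rewrite siF sh !eqxx mulr1 mul1r.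
have hinj : injective h.
  case=> u v; case=> u' v' [e1 e2 e3 e4].
  have ext : forall a b : T, mF a = mF b -> mN a = mN b -> a = b.
    move=> a b ea eb; apply/ffunP => i.
    move/ffunP: ea => /(_ i); move/ffunP: eb => /(_ i); rewrite !ffunE.
    by case: (i \in F) => [_ ->|-> _].
  by rewrite (ext u u' e1 e3) (ext v v' e2 e4).
apply: (le_trans (ler_sum _ (fun uv _ => step1 uv))).
apply: (le_trans (@inj_sum_le _ _ _ h Tp hinj Tp0)).
pose Kp := \prod_i (if i \in F then 1 else 4 * S).
have Kp0 : 0 <= Kp by apply: prodr_ge0 => i _; case: ifP => // _; lra.
rewrite -(pair_bigA _ (fun bF bN => Tp (bF, bN))) /=.
apply: (@le_trans _ _ (\sum_(bF : T * T) (\prod_i m i (bF.1 i) (bF.2 i)) * Kp)).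
  apply: ler_sum => bF _; rewrite /Tp /= -mulr_sumr.
  rewrite ler_wpM2l ?prodr_ge0 //.
  rewrite (@sum_pair_prod R I P (k bF)).
  apply: ler_prod => i _; apply/andP; split.
    by apply: sumr_ge0 => p _; apply: sumr_ge0 => q _.
  rewrite /k; case: (i \in F).
    by rewrite /e0 e0sum.
  exact: share_sum.
rewrite -mulr_suml (@sum_pair_prod R I P m).
apply: (@le_trans _ _ ((\prod_i (if i \in F then #|P|%:R * S else 1)) * Kp)).
  rewrite ler_wpM2r //; apply: ler_prod => i _; apply/andP; split.
    by apply: sumr_ge0 => p _; apply: sumr_ge0 => q _.
  rewrite /m; case: (i \in F).
    apply: (@le_trans _ _ (\sum_(p : P) S)); first by apply: ler_sum.
    by rewrite sumr_const mulr_natl.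
  by rewrite /e0 e0sum.
rewrite /Kp -big_split /=.
apply: ler_prod => i _; case: (i \in F); rewrite ?mulr1 ?mul1r le_refl andbT.
  by rewrite mulr_ge0.
lra.
Qed.

Lemma ore (I : finType) (r : rel I) : symmetric r -> irreflexive r ->
  (forall i, exists j, r i j) ->
  exists F : {set I}, (#|F| * 2 <= #|I|)%N /\
    (forall i, i \notin F -> exists2 j, j \in F & r i j).
Proof.
move=> rs ri rex.
pose dom (D : {set I}) := [forall i, (i \notin D) ==> [exists j in D, r i j]].
have domT : dom (finset.setTfor I) by apply/forallP => i; rewrite finset.in_setT.
case: (@arg_minnP _ (finset.setTfor I) dom (fun D : {set I} => #|D|) domT) => D domD minD.
have domE : forall A, dom A -> forall i, i \notin A -> exists2 j, j \in A & r i j.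
  move=> A /forallP hA i iA; move: (hA i); rewrite iA /= => /existsP[j /andP[jA rij]].
  by exists j.
have domC : dom (~: D).
  apply/forallP => v; rewrite finset.in_setC negbK; apply/implyP => vD.
  case: (boolP [exists j in ~: D, r v j]) => // hno.
  have hno' : forall j, r v j -> j \in D.
    move=> j rvj; apply: contraR hno => jD; apply/existsP; exists j.
    by rewrite finset.in_setC jD rvj.
  have domD' : dom (D :\ v).
    apply/forallP => i; apply/implyP; rewrite finset.in_setD1 negb_and negbK.
    case/orP => [/eqP -> | iD].
      case: (rex v) => j rvj; apply/existsP; exists j.
      rewrite finset.in_setD1 (hno' _ rvj) rvj !andbT.
      by apply/eqP => jv; move: rvj; rewrite jv ri.
    case: (domE D domD i iD) => j jD rij; apply/existsP; exists j.
    rewrite finset.in_setD1 jD rij !andbT.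
    apply/eqP => jv; move: rij; rewrite jv => riv.
    by move: (hno' i); rewrite rs riv => /(_ isT); apply/negP.
  have := minD _ domD'.
  by rewrite (finset.cardsD1 v D) vD; lia.
have := finset.cardsC D.
case: (leqP (#|D| * 2) #|I|) => hD hc.
  by exists D; split => //; apply: domE.
exists (~: D); split; first lia.
by apply: domE.
Qed.

Lemma main_bound (R : realType) (d : nat) (alpha : R) (n k l : nat) :
  (0 < d)%N -> 0 < alpha -> 2 <= alpha * k.+1%:R ->
  star_sum alpha n d l <=
    (#|{set 'I_(2 * n)}| * #|{ffun 'I_(2 * n) -> 'I_(2 * n)}|)%:R *
    (#|boxpt d l|%:R ^+ n * (4 * (Kc d k : R) ^+ d) ^+ (2 * n)).
Proof.
move=> d0 a0 aN.
set I := 'I_(2 * n).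
set P := boxpt d l.
set S : R := (Kc d k : R) ^+ d.
set M : R := 4 * S.
pose p0 : P := [ffun => ord0].
have w0 : forall p q : P, 0 <= wt alpha p q by move=> p q; apply: expR_ge0.
have wr : forall p : P, \sum_q wt alpha p q <= S.
  by move=> p; apply: sumwt.
have wc : forall q : P, \sum_p wt alpha p q <= S.
  move=> q; rewrite (eq_bigr (fun p => wt alpha q p)); first exact: wr.
  by move=> p _; rewrite /wt edist_sym.
have S0 : 0 <= S by apply: le_trans (wr p0); apply: sumr_ge0.
have P1 : 1 <= #|P|%:R :> R.
  by rewrite ler1n card_ffun card_ord expn_gt0.
pose W (uv : {ffun I -> P} * {ffun I -> P}) := \prod_i wt alpha (uv.1 i) (uv.2 i).
pose G (F : {set I}) (s : {ffun I -> I}) :=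
  \sum_(uv : {ffun I -> P} * {ffun I -> P}) W uv * (indc F s uv.1 uv.2)%:R.
have G0 : forall F s, 0 <= G F s.
  move=> F s; apply: sumr_ge0 => uv _; rewrite mulr_ge0 ?ler0n //.
  by apply: prodr_ge0 => i _.
have step1 : star_sum alpha n d l <=
    \sum_(F : {set I}) (if (#|F| <= n)%N then \sum_s G F s else 0).
  rewrite /star_sum.
  apply: (@le_trans _ _ (\sum_(uv : {ffun I -> P} * {ffun I -> P})
     \sum_(F : {set I}) (if (#|F| <= n)%N then
        \sum_(s : {ffun I -> I}) W uv * (indc F s uv.1 uv.2)%:R else 0))).
    rewrite big_mkcond /=; apply: ler_sum => uv _.
    have Fge : forall F : {set I}, 0 <= (if (#|F| <= n)%N then
        \sum_(s : {ffun I -> I}) W uv * (indc F s uv.1 uv.2)%:R else 0).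
      move=> F; case: ifP => // _; apply: sumr_ge0 => s _.
      by rewrite mulr_ge0 ?ler0n //; apply: prodr_ge0 => i _.
    case: ifP => hst; last by apply: sumr_ge0.
    have -> : expR (- \sum_(i < 2 * n) Defs.edist R (uv.1 i) (uv.2 i) `^ alpha) = W uv.
      by rewrite -sumrN expR_sum.
    pose r := fun i j : I => (j != i) && share (uv.1 i) (uv.2 i) (uv.1 j) (uv.2 j).
    have rs : symmetric r.
      move=> i j; rewrite /r /share eq_sym; congr (_ && _).
      by rewrite ![_ == uv.1 i]eq_sym ![_ == uv.2 i]eq_sym; 
         case: (uv.1 i == uv.1 j); case: (uv.1 i == uv.2 j);
         case: (uv.2 i == uv.1 j); case: (uv.2 i == uv.2 j).
    have ri : irreflexive r by move=> i; rewrite /r eqxx.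
    have rex : forall i, exists j, r i j.
      move=> i; move/forallP: hst => /(_ i) /existsP[j hj]; by exists j.
    case: (@ore I r rs ri rex) => F [Fc Fd].
    pose s : {ffun I -> I} := [ffun i => odflt i [pick j | (j \in F) && r i j]].
    have hind : indc F s uv.1 uv.2.
      apply/forallP => i; apply/implyP => iF.
      rewrite /s ffunE; case: pickP => [j /andP[jF /andP[_ sh]] | hno] /=.
        by rewrite jF sh.
      by case: (Fd i iF) => j jF rij; move: (hno j); rewrite jF rij.
    have Fn : (#|F| <= n)%N.
      by move: Fc; rewrite card_ord; lia.
    rewrite (bigD1 F) //= Fn (bigD1 s) //= hind mulr1 -addrA lerDl.
    apply: addr_ge0; first by apply: sumr_ge0 => t _; rewrite mulr_ge0 ?ler0n //; apply: prodr_ge0.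
    by apply: sumr_ge0 => F' _; apply: Fge.
  rewrite exchange_big /=; apply: ler_sum => F _.
  case: ifP => _; last by rewrite big1.
  by rewrite exchange_big.
apply: (le_trans step1).
have C0 : 0 <= #|P|%:R ^+ n * M ^+ (2 * n) :> R.
  by rewrite mulr_ge0 // exprn_ge0 // /M mulr_ge0.
apply: (@le_trans _ _ (\sum_(F : {set I}) \sum_(s : {ffun I -> I})
     (#|P|%:R ^+ n * M ^+ (2 * n)))).
  apply: ler_sum => F _; case: ifP => Fn; last by apply: sumr_ge0.
  apply: ler_sum => s _.
  apply: (le_trans (@core R I P (fun p q => wt alpha p q) S F s p0 w0 wr wc)).
  apply: (@le_trans _ _ (\prod_(i : I) ((if i \in F then #|P|%:R else 1) * M))).
    apply: ler_prod => i _; case: (i \in F); rewrite ?mul1r.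
      rewrite mulr_ge0 ?ler_wpM2l //= ?(le_trans _ P1) //; rewrite /M; lra.
    rewrite le_refl andbT /M; lra.
  rewrite big_split /= prodr_const card_ord -big_mkcond /= prodr_const.
  apply: ler_wpM2r; first by rewrite exprn_ge0 // /M mulr_ge0.
  by apply: ler_weXn2l.
rewrite [X in X <= _](eq_bigr (fun _ => (#|P|%:R ^+ n * M ^+ (2 * n)) *+ #|{ffun I -> I}|)); last first.
  by move=> F _; rewrite sumr_const.
rewrite sumr_const -mulrnA [X in _ <= X]mulr_natl (mulnC #|{ffun I -> I}|).
exact: le_refl.
Qed.

Theorem lemmaA2 (R : realType) (d : nat) (alpha : R) (n : nat) :
  (1 <= d)%N -> 0 < alpha ->
  exists c : R, forall l : nat, (1 <= l)%N ->
    star_sum alpha n d l <= c * (l%:R) ^+ (n * d).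
Proof.
move=> d1 a0.
pose k := Num.truncn (2 / alpha).
have aN : 2 <= alpha * k.+1%:R.
  have := truncnS_gt (2 / alpha); rewrite -/k ltr_pdivrMr // => h.
  by rewrite mulrC ltW.
pose M : R := 4 * (Kc d k : R) ^+ d.
have M0 : 0 <= M.
  by rewrite /M mulr_ge0 // exprn_ge0 // /Kc !mulr_ge0 // exprn_ge0.
exists ((#|{set 'I_(2 * n)}| * #|{ffun 'I_(2 * n) -> 'I_(2 * n)}|)%:R *
        (M ^+ (2 * n) * 3 ^+ (n * d))).
move=> l l1.
apply: (le_trans (@main_bound R d alpha n k l d1 a0 aN)).
rewrite -mulrA ler_wpM2l //.
rewrite -/M -mulrA mulrC.
rewrite ler_wpM2l ?exprn_ge0 //.
rewrite -exprMn (mulnC n d) exprM.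
apply: lerXn2r; rewrite ?nnegrE ?exprn_ge0 ?mulr_ge0 //.
rewrite card_ffun card_ord natrX.
rewrite card_ord; apply: lerXn2r; rewrite ?nnegrE ?mulr_ge0 //.
have : (1 <= l%:R :> R) by rewrite ler1n.
rewrite -[(2 * l).+1]addn1 natrD natrM; lra.
Qed.
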